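(* Let $N,n,d\ge 1$, $B>0$ and $\epsilon>0$. A dataset is $D=\{D_1,\dots,D_N\}$, where each voter $i\in\{1,\dots,N\}$ holds $D_i=\{\langle X_1^{(i)},Z_1^{(i)}\rangle,\dots,\langle X_n^{(i)},Z_n^{(i)}\rangle\}$ with $X_j^{(i)},Z_j^{(i)}\in\mathbb{R}^d$. For each voter let $$\mathcal{L}(\boldsymbol\beta,D_i)=\sum_{j=1}^n \ln\Phi\big(\boldsymbol\beta^\top (X_j^{(i)}-Z_j^{(i)})\big),\qquad \overline{\boldsymbol\beta}_i(D_i)\in\operatorname*{argmax}_{\boldsymbol\beta\in\mathbb{R}^d:\ \|\boldsymbol\beta\|_1\le B}\mathcal{L}(\boldsymbol\beta,D_i),$$ where $\Phi$ is the standard normal CDF and $\overline{\boldsymbol\beta}_i(D_i)$ is a (deterministically chosen) maximizer. Consider the randomized algorithm (Algorithm 1) that outputs $$\boldsymbol\beta^*(D)=\frac1N\sum_{i=1}^N\overline{\boldsymbol\beta}_i(D_i)+\boldsymbol R,$$ where $\boldsymbol R\in\mathbb{R}^d$ has independent coordinates, each distributed as a zero-mean Laplace random variable with scale $\frac{2B}{N\epsilon}$. Then this algorithm satisfies $\epsilon$-differential privacy both with respect to voter-neighboring datasets (VLCP) and with respect to record-neighboring datasets (RLCP).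
   Context: A randomized algorithm $Y$ satisfies $\epsilon$-differential privacy with respect to a neighboring relation if for every pair of neighboring datasets $D,D'$ and every measurable set $\mathcal{Y}$ of outputs, $\Pr[Y(D)\in\mathcal{Y}]\le e^{\epsilon}\Pr[Y(D')\in\mathcal{Y}]$. Two datasets $D=\{D_1,\dots,D_N\}$ and $D'=\{D_1',\dots,D_N'\}$ (each voter having exactly $n$ records in both) are voter-neighboring if they coincide except for the records of a single voter $i$, whose $n$ records may be changed arbitrarily; they are record-neighboring if they coincide except for a single record of a single voter. The Laplace distribution with scale $\lambda$ has density $\frac{1}{2\lambda}e^{-|x|/\lambda}$. *)

(* Defs.v *)
From HB Require Import structures.
From mathcomp Require Import all_boot all_order all_algebra.
From mathcomp Require Import all_classical all_reals all_analysis.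
Set Implicit Arguments. Unset Strict Implicit. Unset Printing Implicit Defensive.
Import Order.TTheory GRing.Theory Num.Theory.
Import numFieldNormedType.Exports.
Local Open Scope classical_set_scope.
Local Open Scope ring_scope.

Section Defs.
Variable R : realType.

Definition Phi (x : R) : R :=
  fine (\int[@lebesgue_measure R]_(t in `]-oo, x]) (normal_pdf 0 1 t)%:E)%E.

Definition dotv d (u v : 'rV[R]_d) : R := \sum_(k < d) u ord0 k * v ord0 k.
Definition l1norm d (u : 'rV[R]_d) : R := \sum_(k < d) `|u ord0 k|.

Definition voter_data n d := 'I_n -> 'rV[R]_d * 'rV[R]_d.
Definition dataset N n d := 'I_N -> voter_data n d.

Definition loglik n d (beta : 'rV[R]_d) (Di : voter_data n d) : R :=
  \sum_(j < n) ln (Phi (dotv beta ((Di j).1 - (Di j).2))).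

Definition is_argmax n d (B : R) (Di : voter_data n d) (b : 'rV[R]_d) : Prop :=
  l1norm b <= B /\
  forall beta : 'rV[R]_d, l1norm beta <= B -> loglik beta Di <= loglik b Di.

Definition laplace_pdf (lam x : R) : R := (2 * lam)^-1 * expR (- `|x| / lam).

Fixpoint iter_int (k : nat) (F : (nat -> R) -> \bar R) : \bar R :=
  match k with
  | 0 => F (fun _ => 0)
  | k'.+1 => (\int[@lebesgue_measure R]_x
               iter_int k' (fun r => F (fun i => if i == k' then x else r i)))%E
  end.

(* Pr[ m + Rnoise \in A ], Rnoise with iid Laplace(0, lam) coordinates:
   the integral over R^d of 1_A(m + r) * prod_k laplace_pdf lam (r_k) *)
Definition laplace_mech_prob d (lam : R) (m : 'rV[R]_d) (A : set 'rV[R]_d)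
  : \bar R :=
  iter_int d (fun r =>
    (\1_A (m + \row_(k < d) r k) * \prod_(k < d) laplace_pdf lam (r k))%:E).

(* Borel sets of R^d: sigma-algebra generated by products of Borel sets *)
Definition rV_boxes d : set (set 'rV[R]_d) :=
  [set S | exists I : 'I_d -> set R,
     (forall k, measurable (I k)) /\ S = [set v : 'rV[R]_d | forall k, I k (v ord0 k)]].
Definition rV_measurable d (A : set 'rV[R]_d) : Prop := <<s @rV_boxes d >> A.

Definition agg_mean N n d (bbar : 'I_N -> voter_data n d -> 'rV[R]_d)
  (D : dataset N n d) : 'rV[R]_d :=
  N%:R^-1 *: \sum_(i < N) bbar i (D i).

Definition voter_neighbor N n d (D D' : dataset N n d) : Prop :=
  exists i : 'I_N, forall i' : 'I_N, i' != i -> D i' = D' i'.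

Definition record_neighbor N n d (D D' : dataset N n d) : Prop :=
  exists (i : 'I_N) (j : 'I_n), forall (i' : 'I_N) (j' : 'I_n),
    (i', j') != (i, j) -> D i' j' = D' i' j'.

Definition alg1_dp N n d (bbar : 'I_N -> voter_data n d -> 'rV[R]_d)
  (lam eps : R) (nb : dataset N n d -> dataset N n d -> Prop) : Prop :=
  forall D D' : dataset N n d, nb D D' ->
  forall A : set 'rV[R]_d, rV_measurable A ->
    (laplace_mech_prob lam (agg_mean bbar D) A
       <= (expR eps)%:E * laplace_mech_prob lam (agg_mean bbar D') A)%E.

End Defs.

(* Main.v *)
Require Import Defs.
From HB Require Import structures.
From mathcomp Require Import all_boot all_order all_algebra.
From mathcomp Require Import all_classical all_reals all_analysis.
From mathcomp Require Import measurable_realfun.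
From mathcomp Require Import lra.
Import Order.TTheory GRing.Theory Num.Theory.
Local Open Scope classical_set_scope.
Local Open Scope ring_scope.

Section S.
Variable R : realType.
Local Notation mu := (@lebesgue_measure R).
Variable c : R.
Definition shiftf (y : measurableTypeR R) : measurableTypeR R := y + c.
Lemma mshiftf : measurable_fun setT shiftf.
Proof. apply: continuous_measurable_fun => x. rewrite /shiftf. apply: cvgD; [exact: cvg_id|exact: cvg_cst]. Qed.
HB.instance Definition _ := isMeasurableFun.Build _ _ _ _ shiftf mshiftf.
Lemma shift_meas A : measurable A -> mu (shiftf @^-1` A) = mu A.
Proof.
move=> mA.
have := @lebesgue_measure_unique R (pushforward mu shiftf : {measure set _ -> \bar R}).
move=> /(_ (mshiftf)) H; rewrite [RHS]H //.
move=> _ [[a b] _ <-] /=.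
have -> : pushforward mu shiftf `]a, b] = mu `](a - c), (b - c)]%classic.
  rewrite /pushforward; congr (mu _); apply/seteqP; split => x /=;
  rewrite /shiftf !in_itv /= ?lerBrDr ?ltrBlDr ?lerBlDr ?ltrBrDr //.
rewrite !lebesgue_measure_itv /= !lte_fin ltrD2r; case: ifP => // _.
by rewrite -EFinD; congr (_%:E); rewrite opprB addrA subrK.
Qed.

Lemma shift_int (f : R -> \bar R) : measurable_fun setT f -> (forall x, 0 <= f x)%E ->
  (\int[mu]_x f (x + c)%R = \int[mu]_x f x)%E.
Proof.
move=> mf f0.
have := @ge0_integral_pushforward _ _ _ _ R shiftf mshiftf mu setT f measurableT mf (fun y _ => f0 y).
rewrite preimage_setT => <-.
apply: eq_measure_integral => A mA _.
rewrite /pushforward. exact: shift_meas.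
Qed.
End S.

Section T.
Import HBNNSimple.
Variable R : realType.
Local Notation mu := (@lebesgue_measure R).
Local Open Scope ereal_scope.

Lemma mono_int (f g : R -> \bar R) : (forall x, 0 <= f x) -> (forall x, f x <= g x) ->
  \int[mu]_x f x <= \int[mu]_x g x.
Proof.
move=> f0 fg.
have g0 : forall x, 0 <= g x by move=> x; exact: le_trans (f0 x) (fg x).
rewrite (ge0_integralTE mu f0) (ge0_integralTE mu g0).
apply: ge_ereal_sup => _ [h hf <-]; apply: ereal_sup_ubound; exists h => //.
by move=> x; exact: le_trans (hf x) (fg x).
Qed.

Lemma KL (f g : R -> \bar R) (a c : R) : (0 < a)%R -> (forall x, 0 <= f x) ->
  (forall x, 0 <= g x) -> (forall x, f x <= a%:E * g (x + c)%R) ->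
  \int[mu]_x f x <= a%:E * \int[mu]_x g x.
Proof.
move=> a0 f0 g0 fg.
rewrite (ge0_integralTE mu f0).
apply: ge_ereal_sup => _ [h hf <-].
rewrite -integralT_nnsfun.
have mh : measurable_fun [set: measurableTypeR R] (fun x => (h x)%:E).
  by apply/measurable_EFinP; exact: measurable_funPT.
rewrite -(@shift_int R (- c) (fun x => (h x)%:E)) //; last by move=> x; rewrite lee_fin.
have -> : \int[mu]_x (h (x + - c)%R)%:E = a%:E * \int[mu]_x (a^-1 * h (x + - c)%R)%:E.
  under [in RHS]eq_integral do rewrite EFinM.
  rewrite ge0_integralZl //.
  - by rewrite muleA -EFinM divff ?gt_eqF // mul1e.
  - apply/measurable_EFinP.
    have K := measurableT_comp (measurable_funPT h) (@mshiftf R (-c)%R).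
    refine K.
  - by move=> x _; rewrite lee_fin.
  - by rewrite lee_fin invr_ge0 ltW.
apply: lee_wpmul2l; first by rewrite lee_fin ltW.
apply: mono_int.
  by move=> x; rewrite lee_fin mulr_ge0 // ?invr_ge0 ?ltW // fun_ge0.
move=> x; rewrite EFinM.
have hle : (h (x + - c)%R)%:E <= a%:E * g x.
  by have := le_trans (hf (x + - c)%R) (fg (x + - c)%R); rewrite subrK.
apply: (le_trans (lee_wpmul2l _ hle)); first by rewrite lee_fin invr_ge0 ltW.
by rewrite muleA -EFinM mulVf ?gt_eqF // mul1e.
Qed.
End T.

Section U.
Variable R : realType.
Local Open Scope ereal_scope.

Lemma iter_ge0 k (F : (nat -> R) -> \bar R) : (forall r, 0 <= F r) -> 0 <= iter_int k F.
Proof.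
elim: k F => [|k IH] F F0 /=; first exact: F0.
by apply: integral_ge0 => x _; apply: IH => r; exact: F0.
Qed.

Lemma iter_shift k : forall (F G : (nat -> R) -> \bar R) (a : R) (c : nat -> R),
  (0 < a)%R -> (forall r, 0 <= F r) -> (forall r, 0 <= G r) ->
  (forall r, F r <= a%:E * G (fun i => if (i < k)%N then (r i + c i)%R else r i)) ->
  iter_int k F <= a%:E * iter_int k G.
Proof.
elim: k => [|k IH] F G a c a0 F0 G0 FG /=.
  by have := FG (fun _ => 0%R).
apply: (@KL R _ _ a (c k)) => //.
- by move=> x; apply: iter_ge0 => r; exact: F0.
- by move=> x; apply: iter_ge0 => r; exact: G0.
move=> x; apply: IH => // r.
have := FG (fun i => if i == k then x else r i).
congr (_ <= _ * G _); apply/funext => i.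
rewrite ltnS leq_eqVlt; case: (eqVneq i k) => [->|ik] //=.
Qed.
End U.

Section V.
Variable R : realType.
Local Open Scope ring_scope.

Lemma lap_ge0 (lam x : R) : 0 < lam -> 0 <= laplace_pdf lam x.
Proof.
move=> l0; rewrite /laplace_pdf mulr_ge0 ?expR_ge0 // invr_ge0 mulr_ge0 //; exact: ltW.
Qed.

Lemma lap_ratio (lam x c : R) : 0 < lam ->
  laplace_pdf lam x <= expR (`|c| / lam) * laplace_pdf lam (x + c).
Proof.
move=> l0; rewrite /laplace_pdf mulrCA -expRD.
apply: ler_wpM2l; first by rewrite invr_ge0 mulr_ge0 // ltW.
rewrite ler_expR -mulrDl ler_pM2r ?invr_gt0 //.
have := ler_normD x c; lra.
Qed.

Lemma lap_dp d (m m' : 'rV[R]_d) (lam eps : R) (A : set 'rV[R]_d) : 0 < lam ->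
  \sum_(k < d) `|m ord0 k - m' ord0 k| <= lam * eps ->
  (laplace_mech_prob lam m A <= (expR eps)%:E * laplace_mech_prob lam m' A)%E.
Proof.
move=> l0 hs; rewrite /laplace_mech_prob.
pose c (i : nat) : R := oapp (fun k : 'I_d => m ord0 k - m' ord0 k) 0 (insub i).
have cE (k : 'I_d) : c k = m ord0 k - m' ord0 k by rewrite /c valK.
apply: (@iter_shift R d _ _ _ c); first exact: expR_gt0.
- by move=> r; rewrite lee_fin mulr_ge0 //; apply: prodr_ge0 => k _; exact: lap_ge0.
- by move=> r; rewrite lee_fin mulr_ge0 //; apply: prodr_ge0 => k _; exact: lap_ge0.
move=> r; rewrite lee_fin.
have -> : m' + \row_(k < d) (if (k < d)%N then r k + c k else r k) = m + \row_(k < d) r k.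
  apply/rowP => k; rewrite !mxE ltn_ord cE; lra.
rewrite mulrCA; apply: ler_wpM2l; first by rewrite indicE.
apply: (@le_trans _ _ (\prod_(k < d) (expR (`|c k| / lam) *
    laplace_pdf lam (if (k < d)%N then r k + c k else r k)))).
  apply: ler_prod => k _; rewrite lap_ge0 //= ltn_ord; exact: lap_ratio.
rewrite big_split /= -expR_sum; apply: ler_wpM2r.
  by apply: prodr_ge0 => k _; exact: lap_ge0.
rewrite ler_expR -mulr_suml ler_pdivrMr // mulrC.
by apply: le_trans hs; rewrite le_eqVlt; apply/orP; left; apply/eqP; apply: eq_bigr => k _; rewrite cE.
Qed.
End V.

Section W.
Variable R : realType.
Local Open Scope ring_scope.

Lemma sens N n d (bbar : 'I_N -> voter_data R n d -> 'rV[R]_d) (B : R)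
  (D D' : dataset R N n d) : (0 < N)%N ->
  (forall i Di, l1norm (bbar i Di) <= B) -> voter_neighbor D D' ->
  \sum_(k < d) `|agg_mean bbar D ord0 k - agg_mean bbar D' ord0 k| <= 2 * B / N%:R.
Proof.
move=> N0 hl [i0 Hi].
have E : agg_mean bbar D - agg_mean bbar D' =
    N%:R^-1 *: (bbar i0 (D i0) - bbar i0 (D' i0)).
  rewrite /agg_mean -scalerBr (bigD1 i0) //= [X in _ - X](bigD1 i0) //=.
  rewrite (eq_bigr (fun i => bbar i (D' i))) => [|i ne]; last by rewrite Hi.
  by rewrite opprD addrACA subrr addr0.
have Ek k : agg_mean bbar D ord0 k - agg_mean bbar D' ord0 k =
    N%:R^-1 * (bbar i0 (D i0) ord0 k - bbar i0 (D' i0) ord0 k).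
  by have := congr1 (fun M : 'rV[R]_d => M ord0 k) E; rewrite !mxE.
have Ninv : 0 <= N%:R^-1 :> R by rewrite invr_ge0 ler0n.
apply: (@le_trans _ _ (N%:R^-1 * (l1norm (bbar i0 (D i0)) + l1norm (bbar i0 (D' i0))))).
  rewrite /l1norm -big_split mulr_sumr; apply: ler_sum => k _.
  rewrite Ek normrM ger0_norm //; apply: ler_wpM2l => //; exact: ler_normB.
rewrite mulrC; apply: ler_wpM2r => //.
have := hl i0 (D i0); have := hl i0 (D' i0); lra.
Qed.
End W.

Theorem theorem1 (R : realType) (N n d : nat) (B eps : R)
  (hN : (1 <= N)%N) (hn : (1 <= n)%N) (hd : (1 <= d)%N)
  (hB : 0 < B) (heps : 0 < eps)
  (bbar : 'I_N -> voter_data R n d -> 'rV[R]_d)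
  (hbbar : forall (i : 'I_N) (Di : voter_data R n d), is_argmax B Di (bbar i Di)) :
  alg1_dp bbar (2 * B / (N%:R * eps)) eps (@voter_neighbor R N n d) /\
  alg1_dp bbar (2 * B / (N%:R * eps)) eps (@record_neighbor R N n d).
Proof.
have N0 : 0 < N%:R :> R by rewrite ltr0n.
have l0 : 0 < 2 * B / (N%:R * eps) by rewrite divr_gt0 ?mulr_gt0.
have le : 2 * B / (N%:R * eps) * eps = 2 * B / N%:R.
  by rewrite invfM !mulrA -(mulrA _ eps^-1) mulVf ?gt_eqF // mulr1.
have hl i Di : l1norm (bbar i Di) <= B by case: (hbbar i Di).
have vdp : alg1_dp bbar (2 * B / (N%:R * eps)) eps (@voter_neighbor R N n d).
  move=> D D' nb A _; apply: lap_dp => //; rewrite le; exact: sens.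
split=> // D D' [i [j H]] A mA; apply: vdp => //; exists i => i' ne.
by apply/funext => j'; apply: H; rewrite xpair_eqE negb_and ne.
Qed.
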